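(* Let $\lambda$ be a partition of $n$ with largest part $\lambda_1$. For every integer $m$ with $\ell(\lambda)\le m\le n-(\lambda_1-1)$, the set $\mathrm{QYT}_{=m}(\lambda)$ is nonempty.
   Context: A partition $\lambda=(\lambda_1\ge\lambda_2\ge\cdots\ge\lambda_k>0)$ of $n$ has length $\ell(\lambda)=k$ and size $n=\sum_i\lambda_i$. Its (French) Young diagram has $\lambda_j$ left-justified boxes in row $j$, rows numbered $1,\dots,k$ from bottom to top; a box is $(i,j)$ with $i$ its column and $j$ its row. A semistandard Young tableau (SSYT) of shape $\lambda$ is a filling of the boxes with positive integers that weakly increase from left to right along rows and strictly increase from bottom to top along columns. An SSYT $T$ is quasi-Yamanouchi if for every integer $i>1$ that appears in $T$, the leftmost occurrence of $i$ lies in a column weakly left of (i.e. with column index $\le$ that of) some occurrence of $i-1$ in $T$. $\mathrm{QYT}_{=m}(\lambda)$ denotes the set of quasi-Yamanouchi tableaux of shape $\lambda$ whose largest entry is exactly $m$. *)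

(* Defs.v *)
From mathcomp Require Import all_boot.
Set Implicit Arguments. Unset Strict Implicit. Unset Printing Implicit Defensive.

Definition is_partition (la : seq nat) : bool :=
  sorted geq la && all (fun p => 0 < p) la.

Definition psize (la : seq nat) : nat := sumn la.

(* A filling of a (French) Young diagram: list of rows, row j (0-indexed
   from the bottom) is the list of entries in columns 0,1,... *)
Definition tableau := seq (seq nat).

Definition shape (T : tableau) : seq nat := map size T.

Definition entry (T : tableau) (c r : nat) : nat := nth 0 (nth [::] T r) c.

Definition is_box (T : tableau) (c r : nat) : bool :=
  (r < size T) && (c < size (nth [::] T r)).

Definition is_SSYT (T : tableau) : Prop :=
  (forall c r, is_box T c r -> 0 < entry T c r) /\
  (forall c r, is_box T c.+1 r -> entry T c r <= entry T c.+1 r) /\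
  (forall c r, is_box T c r.+1 -> entry T c r < entry T c r.+1).

Definition occurs (T : tableau) (i : nat) : Prop :=
  exists c r, is_box T c r /\ entry T c r = i.

Definition quasi_yamanouchi (T : tableau) : Prop :=
  forall i, 1 < i -> occurs T i ->
    exists c r, [/\ is_box T c r, entry T c r = i,
      (forall c2 r2, is_box T c2 r2 -> entry T c2 r2 = i -> c <= c2) &
      exists c' r', [/\ is_box T c' r', entry T c' r' = i.-1 & c <= c']].

Definition max_entry_eq (T : tableau) (m : nat) : Prop :=
  occurs T m /\ (forall c r, is_box T c r -> entry T c r <= m).

Definition QYT_eq (m : nat) (la : seq nat) (T : tableau) : Prop :=
  [/\ shape T = la, is_SSYT T, quasi_yamanouchi T & max_entry_eq T m].

(* Main.v *)
Require Import Defs.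
From mathcomp Require Import all_boot.
From mathcomp Require Import zify.

Definition hc (la : seq nat) (c : nat) : nat := count (fun l => c < l) la.
Definition Sig (la : seq nat) (c : nat) : nat := sumn [seq minn c l | l <- la].
Definition Gf (la : seq nat) (m c : nat) : nat := minn (Sig la c - c) (m - hc la c).
Definition Tab (la : seq nat) (m : nat) : tableau :=
  mkseq (fun r => [seq r.+1 + Gf la m c | c <- iota 0 (nth 0 la r)]) (size la).

Lemma geq_tr : transitive geq.
Proof. by move=> a b c /= h1 h2; exact: leq_trans h2 h1. Qed.

Lemma sorted_le_head a s : sorted geq (a :: s) -> forall x, x \in s -> x <= a.
Proof.
move=> /(order_path_min geq_tr) /allP H x /H //.
Qed.

Lemma nth_lt_count la c r : sorted geq la ->
  (c < nth 0 la r) = (r < hc la c).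
Proof.
elim: la r => [|a s IH] r Hs; first by rewrite nth_nil.
have Hs' : sorted geq s by exact: path_sorted Hs.
have Hle := @sorted_le_head _ _ Hs.
rewrite /hc /=; case: (ltnP c a) => ca.
  case: r => [|r] //=; rewrite IH //.
have H0 : count (fun l => c < l) s = 0.
  apply/eqP; rewrite -leqn0 leqNgt -has_count; apply/hasP => -[x xs cx].
  by have := Hle x xs; lia.
rewrite H0 /=; case: r => [|r] /=; first by rewrite ltnNge ca.
rewrite addn0 ltn0; apply/negbTE; rewrite -leqNgt.
case: (ltnP r (size s)) => rs.
  exact: leq_trans (Hle _ (mem_nth 0 rs)) ca.
by rewrite nth_default.
Qed.

Lemma hc_size la c : hc la c <= size la.
Proof. exact: count_size. Qed.

Lemma hc_mono la c : hc la c.+1 <= hc la c.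
Proof. by apply: sub_count => x /=; lia. Qed.

Lemma Sig0 la : Sig la 0 = 0.
Proof. by rewrite /Sig; elim: la => //= a s ->; rewrite min0n. Qed.

Lemma SigS la c : Sig la c.+1 = Sig la c + hc la c.
Proof.
rewrite /Sig /hc; elim: la => //= a s ->.
case: ltnP => h /=; lia.
Qed.

Lemma Sig_ge la c : c <= head 0 la -> c <= Sig la c.
Proof. rewrite /Sig; case: la => [|a s] /=; lia. Qed.

Lemma Sig_head la : sorted geq la -> Sig la (head 0 la) = sumn la.
Proof.
rewrite /Sig; case: la => [|a s] //= Hs.
have Hle := @sorted_le_head _ _ Hs.
rewrite minnn; congr (_ + _).
elim: s Hle {Hs} => //= b s IH Hle.
rewrite IH; last by move=> x xs; apply: Hle; rewrite inE xs orbT.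
have := Hle b (mem_head _ _); lia.
Qed.

Lemma hc_pos la c : sorted geq la -> c < head 0 la -> 0 < hc la c.
Proof. by move=> Hs h; rewrite -nth_lt_count // nth0. Qed.

Lemma G_mono la m c : sorted geq la -> c < head 0 la -> Gf la m c <= Gf la m c.+1.
Proof.
move=> Hs h; rewrite /Gf SigS.
have h1 := hc_pos la c Hs h; have h2 := @Sig_ge la c (ltnW h); have h3 := hc_mono la c.
lia.
Qed.

Lemma G_inc la m c : sorted geq la -> c.+1 < head 0 la -> size la <= m ->
  Gf la m c.+1 <= Gf la m c + (hc la c).-1.
Proof.
move=> Hs h hm; rewrite /Gf SigS.
have h1 := hc_pos la c.+1 Hs h; have h2 := @Sig_ge la c (ltnW (ltnW h)).
have h3 := hc_mono la c; have h4 := hc_size la c.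
lia.
Qed.

Lemma box_Tab la m c r : sorted geq la -> is_box (Tab la m) c r = (r < hc la c).
Proof.
move=> Hs; rewrite /is_box /Tab size_mkseq.
case: (ltnP r (size la)) => rs /=.
  by rewrite nth_mkseq // size_map size_iota nth_lt_count.
by apply/esym/negbTE; rewrite -leqNgt; apply: leq_trans (hc_size la c) rs.
Qed.

Lemma entry_Tab la m c r : sorted geq la -> r < hc la c ->
  entry (Tab la m) c r = r.+1 + Gf la m c.
Proof.
move=> Hs h; have hr : r < size la := leq_trans h (hc_size la c).
have hc' : c < nth 0 la r by rewrite nth_lt_count.
rewrite /entry /Tab nth_mkseq // (nth_map 0) ?size_iota // nth_iota //.
Qed.

Theorem mainTheorem2 (la : seq nat) (n m : nat) :
  is_partition la -> la != [::] -> psize la = n ->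
  size la <= m -> m <= n - (head 0 la - 1) ->
  exists T : tableau, QYT_eq m la T.
Proof.
move=> /andP[Hs Hpos] Hne Hn Hk Hm.
have Hl1 : 0 < head 0 la.
  by case: la Hne Hpos {Hs Hn Hk Hm} => //= a s _ /andP[].
have hc0 : hc la 0 = size la.
  by apply/eqP; rewrite -all_count.
exists (Tab la m); split.
- rewrite -[RHS](mkseq_nth 0 la); unfold Defs.shape, Tab, mkseq; rewrite -map_comp.
  apply: eq_map => r /=.
  by rewrite size_map size_iota.
- split; [|split].
  + by move=> c r; rewrite box_Tab // => h; rewrite entry_Tab.
  + move=> c r; rewrite box_Tab // => h.
    have h' : r < hc la c := leq_trans h (hc_mono la c).
    have hc1 : c.+1 < head 0 la by rewrite -nth0 nth_lt_count //; exact: leq_ltn_trans (leq0n r) h.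
    rewrite !entry_Tab // leq_add2l; apply: G_mono => //; exact: ltnW.
  + move=> c r; rewrite box_Tab // => h.
    by rewrite !entry_Tab // ltnW.
- move=> i hi [c0 [r0 [hb0 he0]]].
  set P := fun c => has (fun r => is_box (Tab la m) c r && (entry (Tab la m) c r == i)) (iota 0 (size la)).
  have exP : exists c, P c.
    exists c0; apply/hasP; exists r0; last by rewrite hb0 he0 eqxx.
    rewrite mem_iota /= add0n; move: hb0; rewrite box_Tab // => h.
    exact: leq_trans h (hc_size la c0).
  case: (ex_minnP exP) => c /hasP[r _ /andP[hb /eqP he]] Hmin.
  have Hleft : forall c2 r2, is_box (Tab la m) c2 r2 -> entry (Tab la m) c2 r2 = i -> c <= c2.
    move=> c2 r2 hb2 he2; apply: Hmin; apply/hasP; exists r2; last by rewrite hb2 he2 eqxx.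
    rewrite mem_iota /= add0n; move: hb2; rewrite box_Tab // => h.
    exact: leq_trans h (hc_size la c2).
  exists c, r; split => //.
  move: hb he; rewrite box_Tab // => hb; rewrite entry_Tab // => he.
  case: r hb he => [|r] hb he.
    case: c hb he Hmin Hleft => [|c] hb he Hmin Hleft.
      by move: he hi; rewrite /Gf Sig0 min0n; lia.
    have hc1 : c.+1 < head 0 la by rewrite -nth0 nth_lt_count.
    have Hinc := G_inc la m c Hs hc1 Hk.
    have Hmo := G_mono la m c Hs (ltnW hc1).
    have hpos := hc_pos la c Hs (ltnW hc1).
    set r' := Gf la m c.+1 - Gf la m c.
    have hb' : r' < hc la c by rewrite /r'; lia.
    have := Hleft c r'; rewrite box_Tab // entry_Tab // => /(_ hb').
    have : r'.+1 + Gf la m c = i by rewrite /r'; lia.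
    by move=> E /(_ E); rewrite ltnn.
  exists c, r; split => //; first by rewrite box_Tab // ltnW.
  by rewrite entry_Tab ?(ltnW hb) //; lia.
- split.
  + set c := (head 0 la).-1.
    have hc1 : c < head 0 la by rewrite /c; lia.
    have hp := hc_pos la c Hs hc1.
    exists c, (hc la c).-1; rewrite box_Tab // entry_Tab //; last by lia.
    split; first by lia.
    have HS := Sig_head la Hs; have HS2 := SigS la c.
    have E : c.+1 = head 0 la by rewrite /c; lia.
    rewrite E HS in HS2.
    move: Hn; rewrite /psize => Hn.
    have h4 := hc_size la c.
    rewrite /Gf; lia.
  + move=> c r; rewrite box_Tab // => h; rewrite entry_Tab //.
    have h4 := hc_size la c; rewrite /Gf; lia.
Qed.
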